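(* Let $P,Q\in\Gamma_n$ with $P\ne Q$, and $0<r\le R$ with $r\le p_i/q_i\le R$ for all $i$. Then $$r\le\frac{\sqrt{2K(P\|Q)}}{\sqrt{\chi^2(Q\|P)}}\le R.$$
   Context: $\Gamma_n=\{P=(p_1,\dots,p_n): p_i>0,\ \sum_i p_i=1\}$, $n\ge2$. $K(P\|Q)=\sum_i p_i\ln(p_i/q_i)$ and $\chi^2(Q\|P)=\sum_i\frac{(p_i-q_i)^2}{p_i}$. *)

(* Defs.v *)
(* concrete reals R. Distributions on n points are functions
   nat -> R, indices 0..n-1 are the meaningful ones. *)
From Stdlib Require Import Reals.
Open Scope R_scope.

Definition sumn_R (n : nat) (f : nat -> R) : R :=
  match n with
  | O => 0
  | S m => sum_f_R0 f m
  end.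

Definition in_Gamma (n : nat) (P : nat -> R) : Prop :=
  (forall i, (i < n)%nat -> 0 < P i) /\ sumn_R n P = 1.

Definition distinct_on (n : nat) (P Q : nat -> R) : Prop :=
  exists i, (i < n)%nat /\ P i <> Q i.

Definition KL (n : nat) (P Q : nat -> R) : R :=
  sumn_R n (fun i => P i * ln (P i / Q i)).

Definition chi2 (n : nat) (Q P : nat -> R) : R :=
  sumn_R n (fun i => (P i - Q i) ^ 2 / P i).

(* Main.v *)
Require Import Defs.
From Stdlib Require Import Reals Lra Psatz Lia. From Coquelicot Require Import Coquelicot.
Open Scope R_scope.
Lemma mono_sign (f f' : R -> R) :
  (forall x, 0 < x -> derivable_pt_lim f x (f' x)) ->
  (forall x, 0 < x -> 0 <= f' x) -> f 1 = 0 ->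
  forall t, 0 < t -> (1 <= t -> 0 <= f t) /\ (t <= 1 -> f t <= 0).
Proof.
  intros Hd Hp H1 t Ht. split; intros Hle.
  - destruct (Req_dec t 1) as [->|Hne]; [lra|].
    destruct (MVT_cor2 f f' 1 t) as [c [Hc1 Hc2]]; [lra| intros c Hc; apply Hd; lra|].
    assert (0 <= f' c) by (apply Hp; lra). nra.
  - destruct (Req_dec t 1) as [->|Hne]; [lra|].
    destruct (MVT_cor2 f f' t 1) as [c [Hc1 Hc2]]; [lra| intros c Hc; apply Hd; lra|].
    assert (0 <= f' c) by (apply Hp; lra). nra.
Qed.

Lemma lnA t : 0 < t -> (1 <= t -> 3/2 - 2/t + 1/(2*t^2) <= ln t) /\ (t <= 1 -> ln t <= 3/2 - 2/t + 1/(2*t^2)).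
Proof.
  intro Ht.
  destruct (mono_sign (fun x => ln x - (3/2 - 2/x + 1/(2*x^2))) (fun x => (x-1)^2/x^3)) with (t:=t) as [H1 H2]; auto.
  - intros x Hx. apply is_derive_Reals. auto_derive; [repeat split; try lra; apply Rgt_not_eq || apply Rlt_not_eq' ; try nra | field; lra].
  - intros x Hx. apply Rdiv_le_0_compat. apply pow2_ge_0. apply pow_lt; lra.
  - rewrite ln_1. field.
  - split; intro; [specialize (H1 H)|specialize (H2 H)]; lra.
Qed.

Lemma lnB t : 0 < t -> (1 <= t -> ln t <= (t-1)^2/2 + 1 - 1/t) /\ (t <= 1 -> (t-1)^2/2 + 1 - 1/t <= ln t).
Proof.
  intro Ht.
  destruct (mono_sign (fun x => (x-1)^2/2 + 1 - 1/x - ln x) (fun x => (x-1)^2*(x+1)/x^2)) with (t:=t) as [H1 H2]; auto.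
  - intros x Hx. apply is_derive_Reals. auto_derive; [repeat split; try lra; apply Rgt_not_eq || apply Rlt_not_eq' ; try nra | field; lra].
  - intros x Hx. apply Rdiv_le_0_compat. apply Rmult_le_pos. apply pow2_ge_0. lra. apply pow_lt; lra.
  - rewrite ln_1. field.
  - split; intro; [specialize (H1 H)|specialize (H2 H)]; lra.
Qed.

Lemma lnpoly t : 0 < t ->
  (1 <= t -> 3*t^2 - 4*t + 1 <= 2*t^2*ln t /\ 2*t^2*ln t <= t^2*(t-1)^2 + 2*t^2 - 2*t) /\
  (t <= 1 -> 2*t^2*ln t <= 3*t^2 - 4*t + 1 /\ t^2*(t-1)^2 + 2*t^2 - 2*t <= 2*t^2*ln t).
Proof.
  intro Ht. destruct (lnA t Ht) as [A1 A2]. destruct (lnB t Ht) as [B1 B2].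
  assert (E1 : 2*t^2*(3/2 - 2/t + 1/(2*t^2)) = 3*t^2 - 4*t + 1) by (field; lra).
  assert (E2 : 2*t^2*((t-1)^2/2 + 1 - 1/t) = t^2*(t-1)^2 + 2*t^2 - 2*t) by (field; lra).
  assert (Hp : 0 < 2*t^2) by nra.
  split; intro H; split.
  - rewrite <- E1. apply Rmult_le_compat_l; [lra| apply A1; auto].
  - rewrite <- E2. apply Rmult_le_compat_l; [lra| apply B1; auto].
  - rewrite <- E1. apply Rmult_le_compat_l; [lra| apply A2; auto].
  - rewrite <- E2. apply Rmult_le_compat_l; [lra| apply B2; auto].
Qed.

Lemma pointwise p q r Rb : 0 < p -> 0 < q -> 0 < r -> r <= 1 -> 1 <= Rb ->
  r <= p / q <= Rb ->
  r^2 * ((p - q)^2 / p) <= 2 * (p * ln (p / q) - p + q) <= Rb^2 * ((p - q)^2 / p).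
Proof.
  intros Hp Hq Hr Hr1 HR [Hlo Hhi].
  set (t := p / q) in *.
  assert (Ht : 0 < t) by (unfold t; apply Rdiv_lt_0_compat; auto).
  assert (Ep : p = t * q) by (unfold t; field; lra).
  assert (F : (p - q)^2 / p = q * ((t-1)^2 / t)) by (rewrite Ep; field; lra).
  rewrite F. clearbody t. subst p.
  set (L := ln t) in *.
  destruct (lnpoly t Ht) as [C1 C2]. fold L in C1, C2.
  assert (K : forall a, a * (q * ((t - 1) ^ 2 / t)) = q * (a * (t-1)^2) / t) by (intro; field; lra).
  rewrite !K.
  assert (K2 : 2 * (t * q * L - t * q + q) = q * (2*t^2*L - 2*t^2 + 2*t) / t) by (field; lra).
  rewrite K2.
  assert (Hqt : 0 < q / t) by (apply Rdiv_lt_0_compat; auto).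
  assert (G : forall a, q * a / t = a * (q / t)) by (intro; field; lra).
  rewrite !G.
  assert (Hr2 : r^2 <= 1) by nra.
  assert (HR2 : 1 <= Rb^2) by nra.
  assert (Hs : 0 <= (t-1)^2) by apply pow2_ge_0.
  assert (A1 : r^2 * (t-1)^2 <= 1 * (t-1)^2) by (apply Rmult_le_compat_r; lra).
  assert (A2 : 1 * (t-1)^2 <= Rb^2 * (t-1)^2) by (apply Rmult_le_compat_r; lra).
  assert (E : (t-1)^2 = t^2 - 2*t + 1) by ring.
  split; apply Rmult_le_compat_r; try lra.
  - destruct (Rle_dec 1 t) as [H|H].
    + destruct (C1 H). lra.
    + destruct (C2 ltac:(lra)).
      assert (r^2 * (t-1)^2 <= t^2 * (t-1)^2) by (apply Rmult_le_compat_r; [lra| apply pow_incr; lra]). lra.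
  - destruct (Rle_dec 1 t) as [H|H].
    + destruct (C1 H). assert (t^2 * (t-1)^2 <= Rb^2 * (t-1)^2) by (apply Rmult_le_compat_r; [lra| apply pow_incr; lra]). lra.
    + destruct (C2 ltac:(lra)). lra.
Qed.

Lemma sum_lt_strict (f g : nat -> R) m : (forall i, (i <= m)%nat -> f i < g i) -> sum_f_R0 f m < sum_f_R0 g m.
Proof. induction m; intro H; simpl. apply H; lia. assert (f (S m) < g (S m)) by (apply H; lia).
  assert (sum_f_R0 f m < sum_f_R0 g m) by (apply IHm; intros; apply H; lia). lra. Qed.

Lemma sum_nonneg (f : nat -> R) m : (forall i, (i <= m)%nat -> 0 <= f i) -> 0 <= sum_f_R0 f m.
Proof. induction m; intro H; simpl. apply H; lia.
  assert (0 <= f (S m)) by (apply H; lia). assert (0 <= sum_f_R0 f m) by (apply IHm; intros; apply H; lia). lra. Qed.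

Lemma sum_pos_one (f : nat -> R) m i0 : (forall i, (i <= m)%nat -> 0 <= f i) -> (i0 <= m)%nat -> 0 < f i0 -> 0 < sum_f_R0 f m.
Proof. induction m; intros H Hi Hf; simpl.
  - replace i0 with 0%nat in Hf by lia. exact Hf.
  - destruct (Nat.eq_dec i0 (S m)) as [->|Hne].
    + assert (0 <= sum_f_R0 f m). { apply sum_nonneg. intros. apply H. lia. } lra.
    + assert (0 < sum_f_R0 f m) by (apply IHm; auto; lia). assert (0 <= f (S m)) by (apply H; lia). lra.
Qed.

Lemma sum_lin (a b c : nat -> R) m : sum_f_R0 (fun i => 2 * (a i - b i + c i)) m = 2 * (sum_f_R0 a m - sum_f_R0 b m + sum_f_R0 c m).
Proof. induction m; simpl; [lra|rewrite IHm; lra]. Qed.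

Lemma sum_scal (a : nat -> R) k m : sum_f_R0 (fun i => k * a i) m = k * sum_f_R0 a m.
Proof. induction m; simpl; [lra|rewrite IHm; lra]. Qed.

Theorem mainTheorem16 (n : nat) (P Q : nat -> R) (r Rb : R) :
  (2 <= n)%nat ->
  in_Gamma n P -> in_Gamma n Q -> distinct_on n P Q ->
  0 < r -> r <= Rb ->
  (forall i, (i < n)%nat -> r <= P i / Q i <= Rb) ->
  r <= sqrt (2 * KL n P Q) / sqrt (chi2 n Q P) <= Rb.
Proof.
  unfold in_Gamma, distinct_on, KL, chi2, sumn_R.
  intros Hn [HP SP] [HQ SQ] [i0 [Hi0 Hne]] Hr HrR Hb.
  destruct n as [|m]; [lia|].
  assert (HP' : forall i, (i <= m)%nat -> 0 < P i) by (intros; apply HP; lia).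
  assert (HQ' : forall i, (i <= m)%nat -> 0 < Q i) by (intros; apply HQ; lia).
  assert (Hb' : forall i, (i <= m)%nat -> r <= P i / Q i <= Rb) by (intros; apply Hb; lia).
  assert (Hr1 : r <= 1).
  { destruct (Rle_dec r 1) as [H|H]; auto. exfalso.
    assert (sum_f_R0 Q m < sum_f_R0 P m); [|lra].
    apply sum_lt_strict. intros i Hi. destruct (Hb' i Hi) as [H1 _].
    pose proof (HQ' i Hi). assert (H2 : 1 < P i / Q i) by lra.
    apply (Rmult_lt_compat_r (Q i)) in H2; auto. unfold Rdiv in H2. rewrite Rmult_assoc, Rinv_l in H2; lra. }
  assert (HR1 : 1 <= Rb).
  { destruct (Rle_dec 1 Rb) as [H|H]; auto. exfalso.
    assert (sum_f_R0 P m < sum_f_R0 Q m); [|lra].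
    apply sum_lt_strict. intros i Hi. destruct (Hb' i Hi) as [_ H1].
    pose proof (HQ' i Hi). assert (H2 : P i / Q i < 1) by lra.
    apply (Rmult_lt_compat_r (Q i)) in H2; auto. unfold Rdiv in H2. rewrite Rmult_assoc, Rinv_l in H2; lra. }
  set (chi := sum_f_R0 (fun i => (P i - Q i) ^ 2 / P i) m).
  assert (Hchi : 0 < chi).
  { apply (sum_pos_one _ m i0).
    - intros i Hi. apply Rdiv_le_0_compat. apply pow2_ge_0. auto.
    - lia.
    - apply Rdiv_lt_0_compat; [|apply HP'; lia].
      assert (P i0 - Q i0 <> 0) by lra. pose proof (Rsqr_pos_lt _ H). unfold Rsqr in H0. simpl. lra. }
  assert (Hsum : r^2 * chi <= 2 * sum_f_R0 (fun i => P i * ln (P i / Q i)) m <= Rb^2 * chi).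
  { replace (2 * sum_f_R0 (fun i => P i * ln (P i / Q i)) m) with
      (sum_f_R0 (fun i => 2 * (P i * ln (P i / Q i) - P i + Q i)) m)
      by (rewrite sum_lin; lra).
    unfold chi. rewrite <- !sum_scal. split; apply sum_Rle; intros i Hi;
    destruct (pointwise (P i) (Q i) r Rb (HP' i Hi) (HQ' i Hi) Hr Hr1 HR1 (Hb' i Hi)); auto. }
  set (X := 2 * sum_f_R0 (fun i => P i * ln (P i / Q i)) m) in *.
  assert (Hs : 0 < sqrt chi) by (apply sqrt_lt_R0; auto).
  assert (E : forall a, 0 <= a -> sqrt (a^2 * chi) = a * sqrt chi).
  { intros a Ha. rewrite sqrt_mult; [|apply pow2_ge_0|lra]. rewrite sqrt_pow2; auto. }
  destruct Hsum as [L U].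
  assert (L' : r * sqrt chi <= sqrt X) by (rewrite <- E by lra; apply sqrt_le_1_alt; auto).
  assert (U' : sqrt X <= Rb * sqrt chi) by (rewrite <- E by lra; apply sqrt_le_1_alt; auto).
  split.
  - apply (Rmult_le_reg_r (sqrt chi)); auto. unfold Rdiv. rewrite Rmult_assoc, Rinv_l; lra.
  - apply (Rmult_le_reg_r (sqrt chi)); auto. unfold Rdiv. rewrite Rmult_assoc, Rinv_l; lra.
Qed.
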